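(* Let ${\tt V}$ be a closed real subspace of a complex Hilbert space $\mathcal{H}$ and $J$ a conjugation on $\mathcal{H}$. Then: (i) if ${\tt V}$ is $J$-positive, then $J{\tt V}\subseteq{\tt V}'$; (ii) if ${\tt V}+i{\tt V}$ is dense in $\mathcal{H}$ and $J{\tt V}\subseteq{\tt V}'$, then ${\tt V}\cap i{\tt V}=\{0\}$; (iii) if ${\tt V}$ is standard, then the following are equivalent: (a) $J=J_{\tt V}$; (b) ${\tt V}'$ is $J$-positive and $J{\tt V}\subseteq{\tt V}'$; (c) ${\tt V}$ and ${\tt V}'$ are both $J$-positive.
   Context: A conjugation is an antiunitary involution. ${\tt V}'=\{v\in\mathcal{H}:\operatorname{Im}\langle w,v\rangle=0\ \forall w\in{\tt V}\}$ (symplectic complement). ${\tt V}$ is $J$-positive if $\langle\xi,J\xi\rangle\ge0$ for all $\xi\in{\tt V}$. ${\tt V}$ is standard if ${\tt V}\cap i{\tt V}=\{0\}$ and ${\tt V}+i{\tt V}$ is dense; then the Tomita operator $T_{\tt V}(x+iy)=x-iy$ has polar decomposition $T_{\tt V}=J_{\tt V}\Delta_{\tt V}^{1/2}$ with $J_{\tt V}$ a conjugation and $\Delta_{\tt V}$ positive selfadjoint. *)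

(* Defs.v *)
From mathcomp Require Import all_boot all_order all_algebra.
From mathcomp Require Import reals.
From mathcomp.real_closed Require Export complex.
Import GRing.Theory Num.Theory.
Set Implicit Arguments. Unset Strict Implicit. Unset Printing Implicit Defensive.
Local Open Scope ring_scope.
Local Open Scope complex_scope.

Section Hilbert.
Variables (R : realType) (H : lmodType R[i]) (ip : H -> H -> R[i]).

Definition nsq (x : H) : R[i] := ip x x.

Definition converges_to (u : nat -> H) (l : H) : Prop :=
  forall e : R, 0 < e -> exists N : nat, forall n : nat, (N <= n)%N ->
    nsq (u n - l) < e%:C.

Definition cauchy_seq (u : nat -> H) : Prop :=
  forall e : R, 0 < e -> exists N : nat, forall m n : nat,
    (N <= m)%N -> (N <= n)%N -> nsq (u m - u n) < e%:C.

Definition is_hilbert : Prop :=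
  [/\ (forall x y, ip x y = (ip y x)^*),
      (forall x y z (a : R[i]), ip x (a *: y + z) = a * ip x y + ip x z),
      (forall x, 0 <= ip x x),
      (forall x, ip x x = 0 -> x = 0)
    & (forall u, cauchy_seq u -> exists l, converges_to u l)].

Definition real_subspace (V : H -> Prop) : Prop :=
  [/\ V 0,
      (forall x y, V x -> V y -> V (x + y))
    & (forall (r : R) x, V x -> V (r%:C *: x))].

Definition closed_set (V : H -> Prop) : Prop :=
  forall (u : nat -> H) (l : H), (forall n, V (u n)) -> converges_to u l -> V l.

Definition closed_real_subspace (V : H -> Prop) : Prop :=
  real_subspace V /\ closed_set V.

Definition dense (S : H -> Prop) : Prop :=
  forall (x : H) (e : R), 0 < e -> exists y, S y /\ nsq (x - y) < e%:C.

Definition sum_iV (V : H -> Prop) : H -> Prop :=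
  fun z => exists x y, [/\ V x, V y & z = x + 'i *: y].

Definition times_i (V : H -> Prop) : H -> Prop :=
  fun z => exists y, V y /\ z = 'i *: y.

Definition symp_compl (V : H -> Prop) : H -> Prop :=
  fun v => forall w, V w -> 'Im (ip w v) = 0.

Definition conjugation (J : H -> H) : Prop :=
  [/\ (forall x y, J (x + y) = J x + J y),
      (forall (a : R[i]) x, J (a *: x) = a^* *: J x),
      (forall x y, ip (J x) (J y) = ip y x)
    & (forall x, J (J x) = x)].

Definition J_positive (J : H -> H) (V : H -> Prop) : Prop :=
  forall xi, V xi -> 0 <= ip xi (J xi).

Definition standard (V : H -> Prop) : Prop :=
  (forall z, V z -> times_i V z -> z = 0) /\ dense (sum_iV V).

(* Unbounded operators: a domain D together with a function A (values of A
   outside D are irrelevant).  A is positive selfadjoint iff D is a dense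
   complex subspace, A is linear on D, A = A^* (including equality of
   domains: eta is in D iff xi |-> <eta, A xi> is represented on D by some
   vector zeta, and then A eta represents it), and <xi, A xi> >= 0 on D. *)
Definition pos_selfadjoint (D : H -> Prop) (A : H -> H) : Prop :=
  (D 0 /\ dense D) /\
  [/\ (forall (a : R[i]) x y, D x -> D y -> D (a *: x + y)
            /\ A (a *: x + y) = a *: A x + A y),
      (forall eta, D eta <->
         exists zeta, forall xi, D xi -> ip eta (A xi) = ip zeta xi),
      (forall eta xi, D eta -> D xi -> ip eta (A xi) = ip (A eta) xi)
    & (forall xi, D xi -> 0 <= ip xi (A xi))].

(* The Tomita operator T_V (x + iy) = x - iy on V + iV (V standard).
   "J is the modular conjugation J_V" : T_V = J Delta^{1/2} is the polar
   decomposition, i.e. there is a positive selfadjoint operator A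
   (= Delta_V^{1/2}) with domain dom(T_V) = V + iV and T_V = J A. *)
Definition is_modular_conj (V : H -> Prop) (J : H -> H) : Prop :=
  exists (D : H -> Prop) (A : H -> H),
    [/\ pos_selfadjoint D A,
        (forall z, D z <-> sum_iV V z)
      & (forall x y, V x -> V y -> J (A (x + 'i *: y)) = x - 'i *: y)].

End Hilbert.

(* Main.v *)
Require Import Defs.
From mathcomp Require Import all_boot all_order all_algebra.
From mathcomp Require Import boolp classical_sets reals.
From mathcomp.real_closed Require Import complex.
From mathcomp Require Import ring lra.
Import GRing.Theory Num.Theory Order.TTheory.
Local Open Scope ring_scope.
Local Open Scope complex_scope.
Set Implicit Arguments. Unset Strict Implicit. Unset Printing Implicit Defensive.
Section C.
Variable R : realType.
Implicit Types z w : R[i].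
Local Notation Rez := (@complex.Re R).
Local Notation Imz := (@complex.Im R).

Lemma NIm0 z : ('Im z = 0) <-> (Imz z = 0).
Proof. rewrite -complexIm; split; [by move/complexI| by move=> ->]. Qed.
Lemma cIm0 z : Imz z = 0 -> z^* = z.
Proof. by case: z => a b /= ->; simpc. Qed.
Lemma cconjIm z : z^* = z -> Imz z = 0.
Proof. case: z => a b /= [] ; lra. Qed.
Lemma cconji : ('i%C : R[i])^* = - 'i.
Proof. by simpc. Qed.
Lemma cImi z : Imz ('i * z) = Rez z.
Proof. by case: z => a b; simpc. Qed.
Lemma cRei z : Rez ('i * z) = - Imz z.
Proof. by case: z => a b; simpc. Qed.
Lemma cge0 z : 0 <= z -> Imz z = 0 /\ 0 <= Rez z.
Proof. by rewrite lecE /= => /andP[/eqP -> ->]. Qed.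
Lemma cReC z : Imz z = 0 -> z = (Rez z)%:C.
Proof. by case: z => a b /= ->. Qed.
Lemma cge0E z : (0 <= z) = (Imz z == 0) && (0 <= Rez z).
Proof. by rewrite lecE /= eq_sym. Qed.
Lemma cRe_conj z : Rez (z^*) = Rez z.
Proof. by case: z. Qed.
Lemma cIm_conj z : Imz (z^*) = - Imz z.
Proof. by case: z. Qed.
Lemma cReM (r : R) z : Rez (r%:C * z) = r * Rez z.
Proof. by case: z => a b; simpc. Qed.
Lemma cImM (r : R) z : Imz (r%:C * z) = r * Imz z.
Proof. by case: z => a b; simpc. Qed.
Lemma cconjC (r : R) : (r%:C)^* = r%:C.
Proof. by simpc. Qed.
Lemma cltE (a b : R) : (a%:C < b%:C) = (a < b).
Proof. exact: ltcR. Qed.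
Lemma cReD z w : Rez (z + w) = Rez z + Rez w.
Proof. by case: z; case: w. Qed.
Lemma cImD z w : Imz (z + w) = Imz z + Imz w.
Proof. by case: z; case: w. Qed.
Lemma cReN z : Rez (- z) = - Rez z.
Proof. by case: z. Qed.
Lemma cImN z : Imz (- z) = - Imz z.
Proof. by case: z. Qed.
Lemma cconjK z : z^*^* = z.
Proof. by case: z => a b; simpc. Qed.
Lemma cconjD z w : (z + w)^* = z^* + w^*.
Proof. by case: z; case: w => *; simpc. Qed.
Lemma cconjM z w : (z * w)^* = z^* * w^*.
Proof. by case: z; case: w => *; simpc. Qed.
Lemma cconj0 : (0 : R[i])^* = 0.
Proof. by simpc. Qed.
Lemma cReMc (r : R) z : Rez ((r%:C)^* * z) = r * Rez z.
Proof. by case: z => a b; simpc. Qed.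
Lemma cImci z : Imz (('i%C : R[i])^* * z) = - Rez z.
Proof. by case: z => a b; simpc. Qed.
Lemma cconjI z : Imz z = 0 -> z^* = z.
Proof. exact: cIm0. Qed.
Lemma cNic z : - (('i%C : R[i])^* * z) = 'i * z.
Proof. by case: z => a b; simpc. Qed.
Lemma cconj_ge0 z : 0 <= z -> 0 <= z^*.
Proof. by case: z => a b; rewrite !cge0E /= oppr_eq0. Qed.
Lemma ci_neq0 : ('i%C : R[i]) != 0.
Proof. by apply/eqP => -[] /eqP; rewrite oner_eq0. Qed.
Lemma cpos p q r : 0 <= p -> 0 <= q ->
  0 <= (p + 'i * r) + (('i%C : R[i])^* * r + ('i%C : R[i])^* * ('i * q)).
Proof.
case: p => p1 p2; case: q => q1 q2; case: r => r1 r2.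
rewrite !cge0E /= => /andP[/eqP -> hp] /andP[/eqP -> hq].
by simpc; rewrite /=; lra.
Qed.
Lemma chalf1 c : Imz ((2^-1)%:C * (c + c^*)) = 0.
Proof. case: c => a b; simpc; rewrite /=; ring. Qed.
Lemma chalf2 c : Imz ((2^-1)%:C * ('i%C : R[i])^* * (c - c^*)) = 0.
Proof. case: c => a b; simpc; rewrite /=; ring. Qed.
Lemma cihalf : 'i * ((2^-1)%:C * ('i%C : R[i])^*) = (2^-1)%:C.
Proof. simpc; apply/eqP; rewrite eq_complex /=; apply/andP; split; apply/eqP; ring. Qed.
Lemma splitC a : a = (Rez a)%:C + (Imz a)%:C * 'i.
Proof. by case: a => x y; simpc. Qed.
Lemma conjsplit a : (Rez a)%:C + (Imz a)%:C * ('i%C : R[i])^* = a^*.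
Proof. by case: a => x y; simpc. Qed.
Lemma cNconji : - (('i%C : R[i])^*) = 'i.
Proof. by simpc. Qed.
Lemma cii : ('i%C : R[i]) * 'i = -1.
Proof. by simpc. Qed.
Lemma cici : ('i%C : R[i])^* * 'i = 1.
Proof. by simpc. Qed.
End C.
Section Hil.
Variables (R : realType) (H : lmodType R[i]) (ip : H -> H -> R[i]).
Hypothesis ipC : forall x y, ip x y = (ip y x)^*.
Hypothesis ipL : forall x y z (a : R[i]), ip x (a *: y + z) = a * ip x y + ip x z.
Hypothesis ip_ge0 : forall x, 0 <= ip x x.
Hypothesis ip_eq0 : forall x, ip x x = 0 -> x = 0.
Local Notation Rez := (@complex.Re R).
Local Notation Imz := (@complex.Im R).

Lemma ipDr x y z : ip x (y + z) = ip x y + ip x z.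
Proof. by have := ipL x y z 1; rewrite scale1r mul1r. Qed.
Lemma ipr0 x : ip x 0 = 0.
Proof. by apply: (@addrI _ (ip x 0)); rewrite addr0 -ipDr addr0. Qed.
Lemma ipZr x y a : ip x (a *: y) = a * ip x y.
Proof. by rewrite -[a *: y]addr0 ipL ipr0 addr0. Qed.
Lemma ipNr x y : ip x (- y) = - ip x y.
Proof. by rewrite -scaleN1r ipZr mulN1r. Qed.
Lemma ipBr x y z : ip x (y - z) = ip x y - ip x z.
Proof. by rewrite ipDr ipNr. Qed.
Lemma ipCc x y : (ip x y)^* = ip y x.
Proof. by rewrite (ipC y x). Qed.
Lemma ipDl x y z : ip (y + z) x = ip y x + ip z x.
Proof. by rewrite ipC ipDr cconjD; congr (_ + _); apply: ipCc. Qed.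
Lemma ipZl x y a : ip (a *: y) x = a^* * ip y x.
Proof. by rewrite ipC ipZr cconjM; congr (_ * _); apply: ipCc. Qed.
Lemma ip0l x : ip 0 x = 0.
Proof. by rewrite ipC ipr0 cconj0. Qed.
Lemma ipNl x y : ip (- y) x = - ip y x.
Proof. by apply: (@addrI _ (ip y x)); rewrite -ipDl !subrr ip0l. Qed.
Lemma ipBl x y z : ip (y - z) x = ip y x - ip z x.
Proof. by rewrite ipDl ipNl. Qed.

Definition g x y := Rez (ip x y).
Definition N x := Rez (ip x x).

Lemma ipxx x : ip x x = (N x)%:C.
Proof. by rewrite /N; case: (cge0 (ip_ge0 x)) => /cReC. Qed.
Lemma nsqE x : nsq ip x = (N x)%:C.
Proof. exact: ipxx. Qed.
Lemma N_ge0 x : 0 <= N x.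
Proof. by case: (cge0 (ip_ge0 x)). Qed.
Lemma N_eq0 x : N x = 0 -> x = 0.
Proof. by move=> h; apply: ip_eq0; rewrite ipxx h. Qed.
Lemma N0 : N 0 = 0.
Proof. by rewrite /N ipr0. Qed.
Lemma g_sym x y : g x y = g y x.
Proof. by rewrite /g ipC cRe_conj. Qed.
Lemma gDr x y z : g x (y + z) = g x y + g x z.
Proof. by rewrite /g ipDr cReD. Qed.
Lemma gDl x y z : g (y + z) x = g y x + g z x.
Proof. by rewrite /g ipDl cReD. Qed.
Lemma gNr x y : g x (- y) = - g x y.
Proof. by rewrite /g ipNr cReN. Qed.
Lemma gNl x y : g (- y) x = - g y x.
Proof. by rewrite /g ipNl cReN. Qed.
Lemma gBr x y z : g x (y - z) = g x y - g x z.
Proof. by rewrite gDr gNr. Qed.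
Lemma gBl x y z : g (y - z) x = g y x - g z x.
Proof. by rewrite gDl gNl. Qed.
Lemma gZr x y (r : R) : g x (r%:C *: y) = r * g x y.
Proof. by rewrite /g ipZr cReM. Qed.
Lemma gZl x y (r : R) : g (r%:C *: y) x = r * g y x.
Proof. by rewrite /g ipZl; exact: cReMc. Qed.
Lemma g0r x : g x 0 = 0.
Proof. by rewrite /g ipr0. Qed.
Lemma NE x : N x = g x x.
Proof. by []. Qed.
Lemma ND x y : N (x + y) = N x + 2 * g x y + N y.
Proof. rewrite !NE gDl !gDr (g_sym y x); lra. Qed.
Lemma NB x y : N (x - y) = N x - 2 * g x y + N y.
Proof. rewrite !NE gBl !gBr (g_sym y x); lra. Qed.
Lemma NZ x (r : R) : N (r%:C *: x) = r ^+ 2 * N x.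
Proof. by rewrite !NE gZl gZr mulrA expr2. Qed.

Lemma CS x y : g x y ^+ 2 <= N x * N y.
Proof.
have [y0|ny0] := eqVneq (N y) 0.
  by rewrite (N_eq0 y0) g0r N0 mulr0 expr0n.
have Ny : 0 < N y by rewrite lt_def ny0 N_ge0.
have := N_ge0 ((N y)%:C *: x - (g x y)%:C *: y).
rewrite NB !NZ gZl gZr => h.
have : 0 <= N y * (N x * N y - g x y ^+ 2).
  move: h; rewrite !expr2; set a := N y; set b := g x y; set c := N x.
  by move=> h; apply: (le_trans h); rewrite le_eqVlt; apply/orP; left; apply/eqP; ring.
by rewrite pmulr_rge0 // subr_ge0.
Qed.
End Hil.
Section Proj.
Variables (R : realType) (H : lmodType R[i]) (ip : H -> H -> R[i]).
Hypothesis ipC : forall x y, ip x y = (ip y x)^*.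
Hypothesis ipL : forall x y z (a : R[i]), ip x (a *: y + z) = a * ip x y + ip x z.
Hypothesis ip_ge0 : forall x, 0 <= ip x x.
Hypothesis ip_eq0 : forall x, ip x x = 0 -> x = 0.
Hypothesis complete : forall u, cauchy_seq ip u -> exists l, converges_to ip u l.
Local Notation Rez := (@complex.Re R).
Local Notation Imz := (@complex.Im R).
Local Notation g := (g ip).
Local Notation N := (N ip).
Local Notation NB := (NB ipC ipL).
Local Notation NZ := (NZ ipC ipL).
Local Notation gZr := (gZr ipL).
Local Notation N_ge0 := (N_ge0 ip_ge0).
Local Notation nsqE := (nsqE ip_ge0).

Lemma scaleCA (r s : R) (x : H) : r%:C *: (s%:C *: x) = (r * s)%:C *: x.
Proof. by rewrite scalerA rmorphM. Qed.
Lemma scaleCD (r s : R) (x : H) : (r + s)%:C *: x = r%:C *: x + s%:C *: x.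
Proof. by rewrite rmorphD scalerDl. Qed.
Lemma scaleC1 (x : H) : 1%:C *: x = x.
Proof. exact: scale1r. Qed.
Lemma scaleCN1 (x : H) : (-1)%:C *: x = - x.
Proof. by rewrite rmorphN1 scaleN1r. Qed.
Lemma scaleC0 (x : H) : 0%:C *: x = 0.
Proof. exact: scale0r. Qed.

Lemma proj V : real_subspace V -> closed_set ip V -> forall h,
  exists2 p, V p & forall w, V w -> g (h - p) w = 0.
Proof.
case=> V0 VD VZ Vcl h.
have VN : forall x, V x -> V (- x) by move=> x /(VZ (-1)); rewrite scaleCN1.
pose E := fun r : R => exists2 v, V v & N (h - v) = r.
have hinf : has_inf E.
  split; first by exists (N (h - 0)); exists 0.
  by exists 0 => r [v _ <-]; exact: N_ge0.
set d := inf E.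
have dle : forall v, V v -> d <= N (h - v).
  by move=> v Vv; apply: (ge_inf hinf.2); exists v.
have ex : forall n : nat, exists v, V v /\ N (h - v) < d + n.+1%:R^-1.
  move=> n; have n0 : 0 < n.+1%:R^-1 :> R by rewrite invr_gt0 ltr0Sn.
  have [r [v Vv <-] lt] := inf_adherent n0 hinf.
  by exists v.
case: (choice ex) => vs hvs.
have par : forall m n, N (vs m - vs n) <= 2 * m.+1%:R^-1 + 2 * n.+1%:R^-1.
  move=> m n.
  have [Vm Nm] := hvs m; have [Vn Nn] := hvs n.
  set a := h - vs n; set b := h - vs m.
  have eab : a - b = vs m - vs n by rewrite /a /b opprB addrC addrA subrK.
  set mid := (2^-1)%:C *: (vs n + vs m).
  have Vmid : V mid by apply: VZ; apply: VD.
  have two : forall x : H, (2%:R : R)%:C *: x = x + x.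
    by move=> x; rewrite (scaleCD 1 1) scaleC1.
  have emid : h - mid = (2^-1)%:C *: (a + b).
    rewrite /a /b addrACA -opprD -two scalerBr scaleCA mulVf ?scaleC1 //.
    by rewrite pnatr_eq0.
  have h1 := dle _ Vmid.
  rewrite emid NZ in h1.
  have pa := ND ipC ipL a b.
  have pb := NB a b.
  rewrite -eab.
  have e4 : 4 * (2^-1 : R) ^+ 2 = 1 by rewrite expr2; field.
  have h1' : 4 * d <= N (a + b).
    have := ler_wpM2l (_ : 0 <= 4) h1; rewrite mulrA e4 mul1r; apply; lra.
  rewrite -/a in Nn; rewrite -/b in Nm.
  rewrite pa in h1'. rewrite pb.
  clearbody a b. clear -h1' Nm Nn.
  set em := (m.+1%:R^-1 : R) in Nm *. set en := (n.+1%:R^-1 : R) in Nn *. clearbody em en. lra.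
have cau : cauchy_seq ip vs.
  move=> e e0.
  have e4 : 0 < e / 4 by rewrite divr_gt0.
  have [k hk] := ltr_add_invr e4.
  exists k => m n km kn.
  rewrite nsqE ltcR.
  apply: le_lt_trans (par m n) _.
  have hm : m.+1%:R^-1 <= k.+1%:R^-1 :> R by rewrite lef_pV2 ?posrE ?ltr0Sn // ler_nat ltnS.
  have hn : n.+1%:R^-1 <= k.+1%:R^-1 :> R by rewrite lef_pV2 ?posrE ?ltr0Sn // ler_nat ltnS.
  clear -hk hm hn e0.
  set em := (m.+1%:R^-1 : R) in hm *. set en := (n.+1%:R^-1 : R) in hn *.
  set ek := (k.+1%:R^-1 : R) in hk hm hn. clearbody em en ek. lra.
have [p hp] := complete cau.
have Vp : V p := Vcl _ _ (fun n => (hvs n).1) hp.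
exists p => // w Vw.
set c := g (h - p) w.
have key : forall t eps, 0 < eps -> - eps <= - 2 * t * c + t ^+ 2 * N w.
  move=> t eps e0.
  have e2 : 0 < eps / 2 by rewrite divr_gt0.
  have [k1 hk1] := ltr_add_invr e2.
  have Q0 : 0 < 16 * t ^+ 2 * N w + 1.
    have := N_ge0 w; have := sqr_ge0 t; nra.
  have [k2 hk2] := hp (eps ^+ 2 / (16 * t ^+ 2 * N w + 1)) (divr_gt0 (exprn_gt0 2 e0) Q0).
  pose n := maxn k1 k2.
  have [Vn Nn] := hvs n.
  have h1 := dle (vs n + t%:C *: w) (VD _ _ Vn (VZ t w Vw)).
  rewrite (_ : h - (vs n + t%:C *: w) = (h - vs n) - t%:C *: w) in h1; last by rewrite opprD addrA.
  rewrite NB NZ gZr in h1.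
  have eg : g (h - vs n) w = c - g (vs n - p) w.
    rewrite /c -(gBl ipC ipL); congr (g _ w). by rewrite opprB addrA subrK.
  rewrite eg in h1.
  set de := g (vs n - p) w in h1.
  have cs := CS ipC ipL ip_ge0 ip_eq0 (vs n - p) w.
  have := hk2 n (leq_maxr _ _); rewrite nsqE ltcR ltr_pdivlMr // => q2.
  have hn : n.+1%:R^-1 <= k1.+1%:R^-1 :> R.
    by rewrite lef_pV2 ?posrE ?ltr0Sn // ler_nat ltnS leq_maxl.
  have Nvp := N_ge0 (vs n - p).
  have Nw := N_ge0 w.
  have q1 : 16 * t ^+ 2 * de ^+ 2 <= N (vs n - p) * (16 * t ^+ 2 * N w + 1).
    nra.
  have q3 : 4 * t * de < eps by nra.
  clear -h1 Nn hn hk1 q3.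
  set en := (n.+1%:R^-1 : R) in Nn hn. set ek := (k1.+1%:R^-1 : R) in hn hk1. clearbody en ek.
  nra.
have key2 : forall t, 0 <= - 2 * t * c + t ^+ 2 * N w.
  move=> t; rewrite leNgt; apply/negP => lt.
  have pos : 0 < - (- 2 * t * c + t ^+ 2 * N w) / 2 by lra.
  have := key t _ pos; lra.
have Nw := N_ge0 w.
pose s := (N w + 1)^-1.
have s0 : 0 < s by rewrite invr_gt0; lra.
have s1 : s * (N w + 1) = 1 by rewrite mulVf //; lra.
have := key2 (c * s).
move=> k.
have : c ^+ 2 * (s * (1 + s)) <= 0 by nra.
rewrite pmulr_lle0 ?sqr_ge0; last by nra.
by move=> hc; apply/eqP; rewrite -sqrf_eq0 eq_le hc sqr_ge0.
Qed.

Lemma bicomm V : real_subspace V -> closed_set ip V -> forall h,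
  symp_compl ip (symp_compl ip V) h -> V h.
Proof.
move=> VS Vcl h hh.
have [p Vp hp] := proj VS Vcl h.
pose q := 'i *: (h - p).
have Vq : symp_compl ip V q.
  move=> w Vw; apply/NIm0; rewrite /q (ipZr ipL) cImi.
  by rewrite -/(g w (h - p)) (g_sym ipC) hp.
have h0 : Imz (('i%C : R[i])^* * ip (h - p) h) = 0.
  have := hh q Vq; move/NIm0; rewrite /q (ipZl ipC ipL); exact.
rewrite cImci in h0.
have gh : g (h - p) h = 0 by rewrite /g; lra.
have gp : g (h - p) p = 0 by exact: hp.
have : N (h - p) = 0 by rewrite NE (gBr ipL) gh gp subr0.
move/(N_eq0 ip_ge0 ip_eq0)/eqP; rewrite subr_eq0 => /eqP ->; exact: Vp.
Qed.

Lemma dense_orth S u : dense ip S -> (forall s, S s -> ip s u = 0) -> u = 0.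
Proof.
move=> dn hs; apply: (N_eq0 ip_ge0 ip_eq0); apply/le_anti; rewrite N_ge0 andbT.
rewrite leNgt; apply/negP => hu.
have [y [Sy hy]] := dn u (N u) hu.
rewrite nsqE ltcR NB in hy.
have : g u y = 0 by rewrite (g_sym ipC) /g hs.
have := N_ge0 y.
lra.
Qed.

Variable J : H -> H.
Hypothesis JD : forall x y, J (x + y) = J x + J y.
Hypothesis JZ : forall (a : R[i]) x, J (a *: x) = a^* *: J x.
Hypothesis JU : forall x y, ip (J x) (J y) = ip y x.
Hypothesis JJ : forall x, J (J x) = x.

Lemma J0 : J 0 = 0.
Proof. by apply: (@addrI _ (J 0)); rewrite -JD !addr0. Qed.
Lemma symJ x w : ip x (J w) = ip w (J x).
Proof. by rewrite -{1}(JJ x) JU. Qed.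

Lemma partI W : (forall x y, W x -> W y -> W (x + y)) -> J_positive ip J W ->
  forall x, W x -> symp_compl ip W (J x).
Proof.
move=> WD Wp x Wx w Ww; apply/NIm0.
have := Wp _ (WD _ _ Ww Wx).
rewrite JD (ipDl ipC ipL) !(ipDr ipL) (symJ x w).
move/cge0 => [+ _]; rewrite !cImD.
have [h1 _] := cge0 (Wp _ Ww).
have [h2 _] := cge0 (Wp _ Wx).
rewrite h1 h2; lra.
Qed.

Lemma partII V : real_subspace V -> dense ip (sum_iV V) ->
  (forall x, V x -> symp_compl ip V (J x)) ->
  forall z, V z -> times_i V z -> z = 0.
Proof.
case=> V0 VD VZ dn hJ z Vz [y [Vy ez]].
have orth : forall w, V w -> ip w (J z) = 0.
  move=> w Vw.
  have h1 := hJ _ Vz w Vw; have h2 := hJ _ Vy w Vw.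
  move/NIm0 in h1; move/NIm0 in h2.
  move: h1; rewrite ez JZ (ipZr ipL) (cReC h2) => h1.
  have e : Rez (ip w (J y)) = 0.
    move: h1; set r := Rez _; move=> h1.
    have e2 : - Rez (r%:C) = 0 by rewrite -cImci; exact: h1.
    by move: e2 => /= /eqP; rewrite oppr_eq0 => /eqP.
  by rewrite e mulr0.
have ou : forall s, sum_iV V s -> ip s (J z) = 0.
  move=> s [a [b [Va Vb ->]]].
  by rewrite (ipDl ipC ipL) (ipZl ipC ipL) !orth // mulr0 addr0.
have := dense_orth dn ou.
by move=> e; rewrite -(JJ z) e J0.
Qed.
Lemma partIIIab V : real_subspace V -> standard ip V -> is_modular_conj ip V J ->
  J_positive ip J (symp_compl ip V) /\ (forall x, V x -> symp_compl ip V (J x)).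
Proof.
case=> V0 VD VZ [_ dn] [D [A [[[D0 dD] [lin dom sym pos]] hD hJA]]].
have AV : forall x, V x -> A x = J x.
  move=> x Vx; have := hJA x 0 Vx V0; rewrite scaler0 addr0 subr0 => e.
  by rewrite -{2}e JJ.
have DV : forall x, V x -> D x.
  by move=> x Vx; apply/hD; exists x, 0; split => //; rewrite scaler0 addr0.
have JV : forall x, V x -> symp_compl ip V (J x).
  move=> x Vx w Vw; apply/NIm0; apply: cconjIm.
  have e1 : ip w (J x) = ip (J w) x.
    by rewrite -(AV x Vx) (sym _ _ (DV _ Vw) (DV _ Vx)) (AV w Vw).
  rewrite [RHS]e1 -[in RHS](JJ x) JU; exact: (ipCc ipC).
split=> // xi hxi.
have key : forall z, D z -> ip (J xi) (A z) = ip xi z.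
  move=> z /hD [x [y [Vx Vy ->]]].
  rewrite -[A _]JJ hJA // JU.
  rewrite (ipBl ipC ipL) (ipZl ipC ipL) (ipDr ipL) (ipZr ipL).
  have rx := hxi x Vx; have ry := hxi y Vy.
  move/NIm0 in rx; move/NIm0 in ry.
  have ex : ip xi x = ip x xi by rewrite ipC; exact: cconjI.
  have ey : ip xi y = ip y xi by rewrite ipC; exact: cconjI.
  rewrite ex ey; congr (_ + _); exact: cNic.
have DJ : D (J xi) by apply/dom; exists xi.
have AJ : A (J xi) = xi.
  apply/eqP; rewrite -subr_eq0; apply/eqP; apply: (dense_orth dD) => z Dz.
  have e : ip (A (J xi)) z = ip xi z by rewrite -sym // key.
  by rewrite (ipBr ipL) [ip z (A _)]ipC e [ip z xi]ipC subrr.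
rewrite -{1}AJ ipC; apply: cconj_ge0; exact: pos.
Qed.

Lemma partIIIbc V : J_positive ip J (symp_compl ip V) /\ (forall x, V x -> symp_compl ip V (J x)) ->
  J_positive ip J V /\ J_positive ip J (symp_compl ip V).
Proof.
case=> hp hJ; split => // x Vx.
have := hp _ (hJ x Vx); rewrite JJ => h.
rewrite ipC; apply: cconj_ge0; exact: h.
Qed.
Lemma JN x : J (- x) = - J x.
Proof. by apply: (@addrI _ (J x)); rewrite -JD !subrr J0. Qed.

Lemma addsub (a b c d : H) : (a + b) - (c + d) = (a - c) + (b - d).
Proof. by rewrite opprD addrACA. Qed.

Section CA.
Variable V : H -> Prop.
Hypothesis VS : real_subspace V.
Hypothesis Vcl : closed_set ip V.
Hypothesis Vst : standard ip V.
Hypothesis JpV : J_positive ip J V.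
Hypothesis JpV' : J_positive ip J (symp_compl ip V).

Let V0 : V 0. Proof. by case: VS. Qed.
Let VD x y : V x -> V y -> V (x + y). Proof. by case: VS => _ h _; exact: h. Qed.
Let VZ (r : R) x : V x -> V (r%:C *: x). Proof. by case: VS => _ _ h; exact: h. Qed.
Let VN x : V x -> V (- x). Proof. by move/(VZ (-1)); rewrite scaleCN1. Qed.
Let VB x y : V x -> V y -> V (x - y). Proof. by move=> ? ?; apply: VD => //; exact: VN. Qed.

Definition dec z : H * H :=
  xget (0, 0) (fun pq => [/\ V pq.1, V pq.2 & z = pq.1 + 'i *: pq.2]).
Definition T z := (dec z).1 - 'i *: (dec z).2.
Definition A z := J (T z).

Lemma dec_uniq x y x' y' : V x -> V y -> V x' -> V y' ->
  x + 'i *: y = x' + 'i *: y' -> x = x' /\ y = y'.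
Proof.
move=> Vx Vy Vx' Vy' e.
have e2 : x - x' = 'i *: (y' - y).
  rewrite -[x - x']addr0 -(subrr ('i *: y)) -addsub e addsub subrr add0r.
  by rewrite scalerBr.
have z0 : x - x' = 0.
  apply: Vst.1; first exact: VB.
  by exists (y' - y); split => //; exact: VB.
move/eqP: z0; rewrite subr_eq0 => /eqP xx; split => //.
move: e2; rewrite xx subrr => /esym /eqP; rewrite scaler_eq0 (negbTE (ci_neq0 R)) /=.
by rewrite subr_eq0 => /eqP.
Qed.

Lemma decP z : sum_iV V z -> [/\ V (dec z).1, V (dec z).2 & z = (dec z).1 + 'i *: (dec z).2].
Proof.
move=> [x [y [Vx Vy e]]]; rewrite /dec.
have ex : exists pq : H * H, [/\ V pq.1, V pq.2 & z = pq.1 + 'i *: pq.2] by exists (x, y).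
exact: (xgetPex (0, 0) ex).
Qed.

Lemma Tdec x y : V x -> V y -> T (x + 'i *: y) = x - 'i *: y.
Proof.
move=> Vx Vy.
have [V1 V2 e] := decP (ex_intro _ x (ex_intro _ y (And3 Vx Vy erefl))).
have [e1 e2] := dec_uniq Vx Vy V1 V2 e.
by rewrite /T -e1 -e2.
Qed.

Lemma TV x : V x -> T x = x.
Proof. by move=> Vx; have := Tdec Vx V0; rewrite scaler0 addr0 subr0. Qed.

Lemma Dmk x y : V x -> V y -> sum_iV V (x + 'i *: y).
Proof. by move=> Vx Vy; exists x, y. Qed.

Lemma DD u v : sum_iV V u -> sum_iV V v -> sum_iV V (u + v).
Proof.
move=> [x1 [x2 [V1 V2 ->]]] [y1 [y2 [W1 W2 ->]]].
rewrite addrACA -scalerDr; apply: Dmk; exact: VD.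
Qed.

Lemma scale_iC (r : R) (x : H) : r%:C *: ('i *: x) = 'i *: (r%:C *: x).
Proof. by rewrite !scalerA mulrC. Qed.

Lemma DR (r : R) u : sum_iV V u -> sum_iV V (r%:C *: u).
Proof.
move=> [x1 [x2 [V1 V2 ->]]].
rewrite scalerDr scale_iC; apply: Dmk; exact: VZ.
Qed.

Lemma ii (x : H) : 'i *: ('i *: x) = - x.
Proof. by rewrite scalerA cii scaleN1r. Qed.

Lemma Di u : sum_iV V u -> sum_iV V ('i *: u).
Proof.
move=> [x1 [x2 [V1 V2 ->]]].
rewrite scalerDr ii addrC; apply: Dmk => //; exact: VN.
Qed.

Lemma iconjZ (x : H) : ('i%C : R[i])^* *: x = - ('i *: x).
Proof. by rewrite -scaleNr; congr (_ *: _); simpc. Qed.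

Lemma splitZ (a : R[i]) (u : H) : a *: u = (Rez a)%:C *: u + (Imz a)%:C *: ('i *: u).
Proof. by rewrite scalerA -scalerDl -splitC. Qed.

Lemma DZ a u : sum_iV V u -> sum_iV V (a *: u).
Proof. by move=> Du; rewrite splitZ; apply: DD; apply: DR => //; exact: Di. Qed.

Lemma TD u v : sum_iV V u -> sum_iV V v -> T (u + v) = T u + T v.
Proof.
move=> [x1 [x2 [V1 V2 ->]]] [y1 [y2 [W1 W2 ->]]].
have Va := VD V1 W1; have Vb := VD V2 W2.
by rewrite addrACA -scalerDr !Tdec // scalerDr addsub.
Qed.

Lemma TR (r : R) u : sum_iV V u -> T (r%:C *: u) = r%:C *: T u.
Proof.
move=> [x1 [x2 [V1 V2 ->]]].
have Vr1 := VZ r V1; have Vr2 := VZ r V2.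
by rewrite scalerDr scale_iC !Tdec // scalerBr scale_iC.
Qed.

Lemma Ti u : sum_iV V u -> T ('i *: u) = ('i^*) *: T u.
Proof.
move=> [x1 [x2 [V1 V2 ->]]].
have V2' := VN V2.
rewrite scalerDr ii addrC !Tdec //.
rewrite scalerBr scalerA cici scale1r iconjZ.
by rewrite addrC.
Qed.

Lemma TZ a u : sum_iV V u -> T (a *: u) = a^* *: T u.
Proof.
move=> Du; rewrite splitZ TD; first last.
- by apply: DR; exact: Di.
- exact: DR.
rewrite !TR //; last exact: Di.
rewrite Ti // scalerA -scalerDl; congr (_ *: _); exact: conjsplit.
Qed.

Lemma Alin a u v : sum_iV V u -> sum_iV V v -> A (a *: u + v) = a *: A u + A v.
Proof.
move=> Du Dv; rewrite /A TD ?TZ //; last exact: DZ.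
by rewrite JD JZ; congr (_ *: _ + _); exact: cconjK.
Qed.

Lemma AV2 x y : V x -> V y -> A (x + 'i *: y) = J x + 'i *: J y.
Proof.
move=> Vx Vy; rewrite /A Tdec // JD JN JZ iconjZ opprK.
by [].
Qed.

Lemma AVx x : V x -> A x = J x.
Proof. by move=> Vx; rewrite /A TV. Qed.

Lemma Jsym p q : V p -> V q -> ip (J p) q = ip p (J q).
Proof.
move=> Vp Vq.
have h := partI VD JpV Vp Vq; move/NIm0 in h.
by rewrite ipC (cconjI h) symJ.
Qed.

Lemma symA eta xi : sum_iV V eta -> sum_iV V xi -> ip eta (A xi) = ip (A eta) xi.
Proof.
move=> [a1 [a2 [Va1 Va2 ->]]] [x1 [x2 [Vx1 Vx2 ->]]].
rewrite !AV2 //.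
rewrite !(ipDl ipC ipL) !(ipDr ipL) !(ipZl ipC ipL) !(ipZr ipL).
by rewrite !Jsym.
Qed.

Lemma posA xi : sum_iV V xi -> 0 <= ip xi (A xi).
Proof.
move=> [x1 [x2 [Vx1 Vx2 ->]]].
rewrite !AV2 //.
rewrite !(ipDl ipC ipL) !(ipDr ipL) !(ipZl ipC ipL) !(ipZr ipL).
rewrite (symJ x2 x1).
by apply: cpos; apply: JpV.
Qed.

Lemma VD' a b : symp_compl ip V a -> symp_compl ip V b -> symp_compl ip V (a + b).
Proof.
move=> ha hb w Vw; move: (ha w Vw) (hb w Vw) => /NIm0 h1 /NIm0 h2.
by apply/NIm0; rewrite (ipDr ipL) cImD h1 h2 addr0.
Qed.

Lemma JV'V a : symp_compl ip V a -> V (J a).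
Proof.
move=> Va; apply: (bicomm VS Vcl).
exact: (partI VD' JpV' Va).
Qed.

Lemma half_sum (u : H) : (2^-1)%:C *: (u + u) = u.
Proof.
have two : (2%:R : R)%:C *: u = u + u by rewrite (scaleCD 1 1) scaleC1.
rewrite -two scaleCA mulVf ?scaleC1 //.
by rewrite pnatr_eq0.
Qed.

Lemma domA eta : sum_iV V eta <->
  exists zeta, forall xi, sum_iV V xi -> ip eta (A xi) = ip zeta xi.
Proof.
split.
  by move=> De; exists (A eta) => xi Dxi; exact: symA.
case=> zeta hz.
pose u := J eta.
have hx : forall x, V x -> ip x u = ip zeta x.
  move=> x Vx.
  have Dx : sum_iV V x by exists x, 0; split => //; rewrite scaler0 addr0.
  by rewrite -hz // AVx // -{1}(JJ eta) JU.
pose a := (2^-1)%:C *: (u + zeta).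
pose b := ((2^-1)%:C * ('i%C : R[i])^*) *: (u - zeta).
have eu : u = a + 'i *: b.
  rewrite /b scalerA cihalf /a -scalerDr addrACA subrr addr0.
  by rewrite half_sum.
have Va : symp_compl ip V a.
  move=> x Vx; apply/NIm0; rewrite (ipZr ipL) (ipDr ipL) hx // (ipC x zeta).
  exact: chalf1.
have Vb : symp_compl ip V b.
  move=> x Vx; apply/NIm0; rewrite (ipZr ipL) (ipBr ipL) hx // (ipC x zeta).
  exact: chalf2.
have -> : eta = J a + 'i *: (- J b).
  by rewrite -(JJ eta) -/u eu JD [J ('i *: b)]JZ iconjZ scalerN.
exists (J a), (- J b); split => //; first exact: JV'V.
by apply: VN; exact: JV'V.
Qed.

Lemma partIIIca : is_modular_conj ip V J.
Proof.
exists (sum_iV V), A; split => //.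
- split; first split.
  + by exists 0, 0; split => //; rewrite scaler0 addr0.
  + exact: Vst.2.
  split.
  + move=> a x y Dx Dy; split; last exact: Alin.
    by apply: DD => //; exact: DZ.
  + exact: domA.
  + exact: symA.
  + exact: posA.
- by move=> x y Vx Vy; rewrite /A JJ Tdec.
Qed.
End CA.
End Proj.

Theorem lemmaA6 (R : realType) (H : lmodType R[i]) (ip : H -> H -> R[i])
  (V : H -> Prop) (J : H -> H) :
  is_hilbert ip -> closed_real_subspace ip V -> conjugation ip J ->
  [/\ (J_positive ip J V ->
         forall x, V x -> symp_compl ip V (J x)),
      (dense ip (sum_iV V) -> (forall x, V x -> symp_compl ip V (J x)) ->
         forall z, V z -> times_i V z -> z = 0)
    & (standard ip V ->
         [/\ (is_modular_conj ip V J ->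
                J_positive ip J (symp_compl ip V) /\
                (forall x, V x -> symp_compl ip V (J x))),
             (J_positive ip J (symp_compl ip V) /\
                (forall x, V x -> symp_compl ip V (J x)) ->
                J_positive ip J V /\ J_positive ip J (symp_compl ip V))
           & (J_positive ip J V /\ J_positive ip J (symp_compl ip V) ->
                is_modular_conj ip V J)])].
Proof.
case=> ipC ipL ip_ge0 ip_eq0 complete [VS Vcl] [JD JZ JU JJ].
have VD : forall x y, V x -> V y -> V (x + y) by case: VS.
split.
- exact: (partI ipC ipL JD JU JJ VD).
- exact: (partII ipC ipL ip_ge0 ip_eq0 JD JZ JJ VS).
- move=> Vst; split.
  + exact: (partIIIab ipC ipL ip_ge0 ip_eq0 JU JJ VS Vst).
  + exact: (partIIIbc ipC JJ).
  + by case=> h1 h2; exact: (partIIIca ipC ipL ip_ge0 ip_eq0 complete JD JZ JU JJ VS Vcl Vst h1 h2).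
Qed.
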